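(* Let $R$ be an associative ring with identity. Then $R$ is NJ-symmetric in each of the following cases: (1) $R$ is left quasi-duo, or $R$ is right quasi-duo; (2) $R$ is abelian and J-clean; (3) $R$ is abelian and J-quasipolar; (4) $R$ is generalized weakly symmetric (GWS) and $x^2=0$ for every nilpotent $x\in R$ (i.e. the index of nilpotency of nilpotent elements is at most 2).
   Context: $N(R)$ denotes the set of nilpotent elements and $J(R)$ the Jacobson radical of $R$. $R$ is NJ-symmetric if for all $a,b,c\in R$, $abc\in N(R)$ implies $bac\in J(R)$. $R$ is left (right) quasi-duo if every maximal left (right) ideal of $R$ is a two-sided ideal. $R$ is abelian if every idempotent of $R$ is central. $R$ is J-clean if every $a\in R$ can be written $a=e+j$ with $e^2=e$ and $j\in J(R)$. For $a\in R$, $\mathrm{comm}(a)=\{y\in R: ya=ay\}$ and $\mathrm{comm}^2(a)=\{x\in R: xy=yx \text{ for all } y\in \mathrm{comm}(a)\}$; $R$ is J-quasipolar if for every $a\in R$ there is $f=f^2\in\mathrm{comm}^2(a)$ with $a+f\in J(R)$. $R$ is GWS if for all $a,b,c\in R$, $abc=0$ implies $bac\in N(R)$. *)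

(* Defs.v *)
From mathcomp Require Import all_boot all_algebra.
Set Implicit Arguments. Unset Strict Implicit. Unset Printing Implicit Defensive.
Import GRing.Theory.
Local Open Scope ring_scope.

Definition nilp (R : nzRingType) (x : R) : Prop := exists n : nat, x ^+ n = 0.

Definition left_ideal (R : nzRingType) (I : R -> Prop) : Prop :=
  [/\ I 0, (forall x y, I x -> I y -> I (x + y)) & (forall r x, I x -> I (r * x))].

Definition right_ideal (R : nzRingType) (I : R -> Prop) : Prop :=
  [/\ I 0, (forall x y, I x -> I y -> I (x + y)) & (forall r x, I x -> I (x * r))].

Definition two_sided_ideal (R : nzRingType) (I : R -> Prop) : Prop :=
  left_ideal I /\ right_ideal I.

Definition maximal_left_ideal (R : nzRingType) (M : R -> Prop) : Prop :=
  [/\ left_ideal M, ~ M 1 &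
      forall I, left_ideal I -> ~ I 1 -> (forall x, M x -> I x) -> forall x, I x -> M x].

Definition maximal_right_ideal (R : nzRingType) (M : R -> Prop) : Prop :=
  [/\ right_ideal M, ~ M 1 &
      forall I, right_ideal I -> ~ I 1 -> (forall x, M x -> I x) -> forall x, I x -> M x].

Definition jacobson (R : nzRingType) (x : R) : Prop :=
  forall M, maximal_left_ideal M -> M x.

Definition NJ_symmetric (R : nzRingType) : Prop :=
  forall a b c : R, nilp (a * b * c) -> jacobson (b * a * c).

Definition left_quasi_duo (R : nzRingType) : Prop :=
  forall M : R -> Prop, maximal_left_ideal M -> two_sided_ideal M.

Definition right_quasi_duo (R : nzRingType) : Prop :=
  forall M : R -> Prop, maximal_right_ideal M -> two_sided_ideal M.

Definition abelian_ring (R : nzRingType) : Prop :=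
  forall e : R, e * e = e -> forall x, e * x = x * e.

Definition J_clean (R : nzRingType) : Prop :=
  forall a : R, exists e j, [/\ e * e = e, jacobson j & a = e + j].

Definition in_comm2 (R : nzRingType) (a f : R) : Prop :=
  forall y, y * a = a * y -> f * y = y * f.

Definition J_quasipolar (R : nzRingType) : Prop :=
  forall a : R, exists f, [/\ f * f = f, in_comm2 a f & jacobson (a + f)].

Definition GWS (R : nzRingType) : Prop :=
  forall a b c : R, a * b * c = 0 -> nilp (b * a * c).

Definition nil_index_le2 (R : nzRingType) : Prop :=
  forall x : R, nilp x -> x ^+ 2 = 0.

(* Main.v *)
Require Import Defs.
From mathcomp Require Import all_boot all_algebra.
From mathcomp Require Import boolp classical_sets.
From Stdlib Require Import Classical.
Set Implicit Arguments. Unset Strict Implicit. Unset Printing Implicit Defensive.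
Import GRing.Theory.
Local Open Scope ring_scope.
Section S.
Variable R : nzRingType.
Implicit Types (M : R -> Prop) (x y a b c r : R).

Lemma span_left M x : maximal_left_ideal M -> ~ M x ->
  exists m r, M m /\ 1 = m + r * x.
Proof.
case=> [[M0 MD MM] M1 Mmax] Mx.
pose I z := exists m r, M m /\ z = m + r * x.
have [I1|nI1] := classic (I 1); first by [].
exfalso; apply: Mx; apply: (Mmax I) => //.
- split.
  + by exists 0, 0; rewrite mul0r addr0.
  + move=> _ _ [m1 [r1 [Hm1 ->]]] [m2 [r2 [Hm2 ->]]].
    by exists (m1 + m2), (r1 + r2); split; [apply: MD|rewrite mulrDl addrACA].
  + move=> s _ [m [r [Hm ->]]].
    by exists (s * m), (s * r); split; [apply: MM|rewrite mulrDr mulrA].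
- by move=> m Hm; exists m, 0; rewrite mul0r addr0.
- by exists 0, 1; rewrite mul1r add0r.
Qed.

Lemma span_right M x : maximal_right_ideal M -> ~ M x ->
  exists m r, M m /\ 1 = m + x * r.
Proof.
case=> [[M0 MD MM] M1 Mmax] Mx.
pose I z := exists m r, M m /\ z = m + x * r.
have [I1|nI1] := classic (I 1); first by [].
exfalso; apply: Mx; apply: (Mmax I) => //.
- split.
  + by exists 0, 0; rewrite mulr0 addr0.
  + move=> _ _ [m1 [r1 [Hm1 ->]]] [m2 [r2 [Hm2 ->]]].
    by exists (m1 + m2), (r1 + r2); split; [apply: MD|rewrite mulrDr addrACA].
  + move=> s _ [m [r [Hm ->]]].
    by exists (m * s), (r * s); split; [apply: MM|rewrite mulrDl mulrA].
- by move=> m Hm; exists m, 0; rewrite mulr0 addr0.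
- by exists 0, 1; rewrite mulr1 add0r.
Qed.

Definition primeish M := forall x y, M (x * y) -> M x \/ M y.

Lemma primeish_left M : maximal_left_ideal M -> two_sided_ideal M -> primeish M.
Proof.
move=> Mmax [[M0 MD MM] [_ _ MMr]] x y Mxy.
have [Mx|nMx] := classic (M x); first by left.
right; have [m [r [Hm E]]] := span_left Mmax nMx.
have -> : y = m * y + r * (x * y) by rewrite mulrA -mulrDl -E mul1r.
by apply: MD; [apply: MMr|apply: MM].
Qed.

Lemma primeish_right M : maximal_right_ideal M -> two_sided_ideal M -> primeish M.
Proof.
move=> Mmax [[M0 MD MM] [_ _ MMr]] x y Mxy.
have [My|nMy] := classic (M y); first by right.
left; have [m [r [Hm E]]] := span_right Mmax nMy.
have -> : x = x * m + (x * y) * r by rewrite -mulrA -mulrDr -E mulr1.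
by apply: MD; [apply: MM|apply: MMr].
Qed.

Lemma primeish_nil M a b c : two_sided_ideal M -> primeish M ->
  Defs.nilp (a * b * c) -> M (b * a * c).
Proof.
move=> [[M0 MD MM] [_ _ MMr]] Mp [n Hn].
have Mabc : M (a * b * c).
  have : M ((a * b * c) ^+ n) by rewrite Hn.
  elim: n {Hn} => [|n IH].
    by rewrite expr0 => /(MMr (a * b * c)); rewrite mul1r.
  by rewrite exprS => /Mp [|/IH].
have [/Mp[Ma|Mb]|Mc] := Mp _ _ Mabc.
- exact: (MMr _ _ (MM _ _ Ma)).
- exact: (MMr _ _ (MMr _ _ Mb)).
- exact: (MM _ _ Mc).
Qed.

End S.
Section S2.
Variable R : nzRingType.
Implicit Types (M : R -> Prop) (x y a b c r : R).

Lemma jac0 : jacobson (0 : R).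
Proof. by move=> M [[]]. Qed.

Lemma jacD x y : jacobson x -> jacobson y -> jacobson (x + y).
Proof. by move=> Jx Jy M HM; case: (HM) => [[_ MD _] _ _]; apply: MD; [apply: Jx|apply: Jy]. Qed.

Lemma jacM r x : jacobson x -> jacobson (r * x).
Proof. by move=> Jx M HM; case: (HM) => [[_ _ MM] _ _]; apply: MM; apply: Jx. Qed.

Lemma jacN x : jacobson x -> jacobson (- x).
Proof. by move=> Jx; rewrite -mulN1r; apply: jacM. Qed.

Lemma jacB x y : jacobson x -> jacobson y -> jacobson (x - y).
Proof. by move=> Jx Jy; apply: jacD => //; apply: jacN. Qed.

Lemma jacMr x r : jacobson x -> jacobson (x * r).
Proof.
move=> Jx M HM; case: (HM) => [[M0 MD MM] M1 Mmax].
have [Mr|nMr] := classic (M r); first by apply: MM.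
pose I y := M (y * r).
suff HI : maximal_left_ideal I by apply: (Jx I HI).
split.
- split; rewrite /I.
  + by rewrite mul0r.
  + by move=> u v Mu Mv; rewrite mulrDl; apply: MD.
  + by move=> s u Mu; rewrite -mulrA; apply: MM.
- by rewrite /I mul1r.
- move=> K [K0 KD KM] K1 IK k Kk.
  have [//|nM] := classic (M (k * r)).
  have [m [s [Hm E]]] := span_left HM nM.
  exfalso; apply: K1.
  have H1 : I (1 - r * s * k).
    rewrite /I mulrBl mul1r.
    have Em : m = 1 - s * (k * r) by rewrite E addrK.
    have -> : r - r * s * k * r = r * m by rewrite Em mulrBr mulr1 !mulrA.
    by apply: MM.

  have := KD _ _ (IK _ H1) (KM (r * s) k Kk).
  by rewrite subrK.
Qed.

Lemma jac_lqr x : (forall r, exists u, u * (1 - r * x) = 1) -> jacobson x.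
Proof.
move=> H M HM; case: (HM) => [[M0 MD MM] M1 Mmax].
apply: NNPP => nMx.
have [m [r [Hm E]]] := span_left HM nMx.
have [u Hu] := H r.
apply: M1; rewrite -Hu.
have -> : 1 - r * x = m by rewrite E addrK.
by apply: MM.
Qed.

Lemma geom y n : exists u, u * (1 - y) = 1 - y ^+ n.
Proof.
elim: n => [|n [u Hu]]; first by exists 0; rewrite mul0r expr0 subrr.
exists (u + y ^+ n); rewrite mulrDl Hu mulrBr mulr1 -exprSr.
by rewrite addrA subrK.
Qed.

Lemma nil_lqr y : Defs.nilp y -> exists u, u * (1 - y) = 1.
Proof.
by case=> n Hn; have [u Hu] := geom y n; exists u; rewrite Hu Hn subr0.
Qed.

End S2.
Section S3.
Variable R : nzRingType.
Implicit Types (M : R -> Prop) (x y a b c r u v : R).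

Lemma sq_expand u v : (u + v) * (u + v) = (u * u + u * v) + (v * u + v * v).
Proof. by rewrite mulrDl !mulrDr. Qed.

Section Bool.
Hypothesis H : forall a : R, jacobson (a - a * a).

Lemma bool_nil x : Defs.nilp x -> jacobson x.
Proof.
case=> n Hn.
have P k : jacobson (x - x ^+ k.+1).
  elim: k => [|k IH]; first by rewrite expr1 subrr; apply: jac0.
  have -> : x - x ^+ k.+2 = (x - x ^+ k.+1) + x ^+ k * (x - x * x).
    by rewrite mulrBr mulrA -!exprSr addrA subrK.
  by apply: jacD => //; apply: jacM.
case: n Hn => [|n] Hn; first by move: Hn; rewrite expr0 => /eqP; rewrite oner_eq0.
by have := P n; rewrite Hn subr0.
Qed.

Lemma bool_2 a : jacobson (a + a).
Proof.
have := jacB (H a) (H (- a)).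
by rewrite mulrNN opprB opprK subrKA.
Qed.

Lemma bool_sym u v : jacobson (u * v + v * u).
Proof.
have E : (u - u * u) + (v - v * v) - ((u + v) - (u + v) * (u + v)) = u * v + v * u.
  rewrite sq_expand opprB [u - u * u + _]addrACA -opprD (addrC (u + v - _)) addrA subrK.
  by rewrite [u * u + u * v]addrC addrACA addrK.
rewrite -E; apply: jacB; last exact: H.
by apply: jacD; apply: H.
Qed.

Lemma bool_comm u v : jacobson (u * v - v * u).
Proof.
have := jacB (bool_sym u v) (bool_2 (v * u)).
by rewrite addrKA.
Qed.

Lemma bool_NJ : NJ_symmetric R.
Proof.
move=> a b c Hn.
have J1 := bool_nil Hn.
have J2 : jacobson (b * a * c - a * b * c).
  by rewrite -mulrBl; apply: jacMr; apply: bool_comm.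
by have := jacD J2 J1; rewrite subrK.
Qed.

End Bool.

Lemma Jclean_NJ : J_clean R -> NJ_symmetric R.
Proof.
move=> HJ; apply: bool_NJ => a.
have [e [j [He Jj ->]]] := HJ a.
rewrite sq_expand He -(addrA e (e * j)) (addrC e j) addrKA.
apply: jacB => //; apply: jacD; first by apply: jacM.
by apply: jacD; [apply: jacMr|apply: jacM].
Qed.

Lemma Jqp_NJ : J_quasipolar R -> NJ_symmetric R.
Proof.
move=> HJ; apply: bool_NJ => a.
have Hp b : jacobson (b + b * b).
  have [f [Hf _ Jbf]] := HJ b.
  have -> : b + b * b = (b + f) + b * (b + f) - (b + f) * f.
    rewrite mulrDr mulrDl Hf; apply/eqP; rewrite eq_sym subr_eq.
    by rewrite addrACA (addrC f).
  by apply: jacB; [apply: jacD => //; apply: jacM|apply: jacMr].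
have := jacN (Hp (- a)).
by rewrite mulrNN opprD opprK.
Qed.

End S3.
Local Open Scope classical_set_scope.
Section S4.
Variable R : nzRingType.

Lemma exists_max_right (I : R -> Prop) : right_ideal I -> ~ I 1 ->
  exists M, maximal_right_ideal M /\ (forall z, I z -> M z).
Proof.
move=> HI I1.
pose Q (X : set R) := [/\ right_ideal X, ~ X 1 & I `<=` X].
pose P (X : set R) := X = set0 \/ Q X.
have PQ Y z : P Y -> Y z -> Q Y.
  by case=> // E; rewrite E.
have [A [PA Amax]] : exists A, P A /\ forall B, A `<` B -> ~ P B.
  apply: Zorn_bigcup => F FP Ftot.
  have [[X0 [z0 [FX0 Xz0]]]|none] := classic (exists X z, F X /\ X z); last first.
    left; apply/seteqP; split => z // [X FX Xz].
    by exfalso; apply: none; exists X, z.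
  have [[X00 _ _] _ IX0] := PQ _ _ (FP _ FX0) Xz0.
  right; split.
  - split.
    + by exists X0.
    + move=> u v [Y1 FY1 Yu] [Y2 FY2 Yv].
      have [S12|S21] := Ftot _ _ FY1 FY2.
      * have [[_ YD _] _ _] := PQ _ _ (FP _ FY2) Yv.
        by exists Y2 => //; apply: YD => //; apply: S12.
      * have [[_ YD _] _ _] := PQ _ _ (FP _ FY1) Yu.
        by exists Y1 => //; apply: YD => //; apply: S21.
    + move=> r u [Y FY Yu].
      have [[_ _ YM] _ _] := PQ _ _ (FP _ FY) Yu.
      by exists Y => //; apply: YM.
  - move=> [Y FY Y1].
    by have [_ nY1 _] := PQ _ _ (FP _ FY) Y1.
  - by move=> z Iz; exists X0 => //; apply: IX0.
have QA : Q A.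
  case: PA => // A0; exfalso; apply: (Amax I); last by right; split.
  rewrite A0; split => // sub.
  by case: HI => I0 _ _; have := sub 0 I0.
case: QA => RA A1 IA.
exists A; split => //; split => // I' RI' I'1 AI' x I'x.
apply: NNPP => nAx; apply: (Amax I').
  by split => // sub; apply: nAx; apply: sub.
by right; split => // z Iz; apply: AI'; apply: IA.
Qed.

End S4.
Local Close Scope classical_set_scope.
Section S5.
Variable R : nzRingType.
Implicit Types (M : R -> Prop) (x y a b c r u v : R).

Lemma right_jac x : (forall M, maximal_right_ideal M -> M x) -> jacobson x.
Proof.
move=> Hx.
have rinv s : exists v, (1 - x * s) * v = 1.
  apply: NNPP => nex.
  pose I z := exists t, z = (1 - x * s) * t.
  have [M [HM IM]] : exists M, maximal_right_ideal M /\ (forall z, I z -> M z).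
    apply: exists_max_right.
    - split.
      + by exists 0; rewrite mulr0.
      + by move=> _ _ [t1 ->] [t2 ->]; exists (t1 + t2); rewrite mulrDr.
      + by move=> r _ [t ->]; exists (t * r); rewrite mulrA.
    - by move=> [t Et]; apply: nex; exists t.
  case: (HM) => [[M0 MD MM] M1 _]; apply: M1.
  have M2 : M (1 - x * s) by apply: IM; exists 1; rewrite mulr1.
  have := MD _ _ M2 (MM s x (Hx M HM)).
  by rewrite subrK.
apply: jac_lqr => r.
have [v Hv] := rinv r.
have Ev : v = 1 - x * (- (r * v)).
  by rewrite mulrN opprK -{1}Hv mulrBl mul1r -mulrA subrK.
have [v2 Hv2] := rinv (- (r * v)).
rewrite -Ev in Hv2.
have Hv' : v * (1 - x * r) = 1.
  have E2 : (1 - x * r) * (v * v2) = v2 by rewrite mulrA Hv mul1r.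
  by rewrite Hv2 mulr1 in E2; rewrite E2.
exists (1 + r * v * x).
rewrite mulrDl mul1r.
have -> : r * v * x * (1 - r * x) = r * (v * (1 - x * r)) * x.
  by rewrite !mulrBr !mulrBl !mulr1 !mulrA.
by rewrite Hv' mulr1 subrK.
Qed.

Lemma nilp_sq y : Defs.nilp (y * y) -> Defs.nilp y.
Proof. by case=> n Hn; exists (2 * n)%N; rewrite exprM expr2. Qed.

Lemma expr_swap x y n : (y * x) ^+ n.+1 = y * (x * y) ^+ n * x.
Proof.
elim: n => [|n IH]; first by rewrite expr1 expr0 mulr1.
by rewrite exprSr IH [(x * y) ^+ n.+1]exprSr !mulrA.
Qed.

Lemma nilp_swap x y : Defs.nilp (x * y) -> Defs.nilp (y * x).
Proof. by case=> n Hn; exists n.+1; rewrite expr_swap Hn mulr0 mul0r. Qed.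

Section GWS.
Hypothesis G : GWS R.
Hypothesis I2 : nil_index_le2 R.

Lemma nilp_l r x : Defs.nilp x -> Defs.nilp (r * x).
Proof.
move=> Nx; have Hxx : x * x = 0 by rewrite -expr2; apply: I2.
apply: nilp_sq.
have := G (a := r) (b := r * x) (c := x).
rewrite -!mulrA Hxx !mulr0 => /(_ erefl).
by rewrite !mulrA.
Qed.

Lemma nilp_r r x : Defs.nilp x -> Defs.nilp (x * r).
Proof. by move=> Nx; apply: nilp_swap; apply: nilp_l. Qed.

Lemma nilp_ins x y r : Defs.nilp (x * y) -> Defs.nilp (x * r * y).
Proof.
move=> Nxy; apply: nilp_sq.
have := nilp_r (r * y) (nilp_l (x * r) (nilp_swap Nxy)).
by rewrite !mulrA.
Qed.

Lemma gws_NJ : NJ_symmetric R.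
Proof.
move=> a b c Nabc.
have N1 : Defs.nilp (a * c * b * c).
  by rewrite -mulrA; apply: nilp_ins; rewrite mulrA.
have N2 : Defs.nilp (a * c * b * a * c) by apply: nilp_ins.
have N3 : Defs.nilp (b * a * c).
  apply: nilp_sq; have := nilp_l b N2; by rewrite !mulrA.
apply: jac_lqr => r; apply: nil_lqr; exact: nilp_l.
Qed.

End GWS.

Lemma lqd_NJ : left_quasi_duo R -> NJ_symmetric R.
Proof.
move=> H a b c N M HM.
have T := H M HM.
exact: primeish_nil T (primeish_left HM T) N.
Qed.

Lemma rqd_NJ : right_quasi_duo R -> NJ_symmetric R.
Proof.
move=> H a b c N; apply: right_jac => M HM.
have T := H M HM.
exact: primeish_nil T (primeish_right HM T) N.
Qed.

End S5.

Theorem theorem2p4 (R : nzRingType) :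
  (left_quasi_duo R \/ right_quasi_duo R) \/
  (abelian_ring R /\ J_clean R) \/
  (abelian_ring R /\ J_quasipolar R) \/
  (GWS R /\ nil_index_le2 R) ->
  NJ_symmetric R.
Proof.
case=> [[H|H]|[[_ H]|[[_ H]|[H1 H2]]]].
- exact: lqd_NJ.
- exact: rqd_NJ.
- exact: Jclean_NJ.
- exact: Jqp_NJ.
- exact: gws_NJ.
Qed.
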